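(* Let $n\ge 1$ and $1\le p\le n$. Then the number of $\alpha\in\mathcal{OCT}_n$ with $h(\alpha)=p$ is $$F(n;p)=(n-p+1)\binom{n-1}{p-1}.$$
   Context: $X_n=\{1,2,\dots,n\}$ with its usual order; maps are written on the right ($x\alpha$). A map $\alpha:X_n\to X_n$ is order-preserving if $x\le y$ implies $x\alpha\le y\alpha$, and a contraction if $|x\alpha-y\alpha|\le|x-y|$ for all $x,y$. $\mathcal{OCT}_n$ is the set of all order-preserving contractions $X_n\to X_n$ (defined on all of $X_n$). Height $h(\alpha)=|\mathrm{Im}\,\alpha|$. *)

(* Defs.v *)
(* X_n = {1,..,n} is modelled by 'I_n = {0,..,n-1}
   (the shift x |-> x-1 is an order isomorphism preserving distances). *)
From mathcomp Require Import all_boot.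
Set Implicit Arguments. Unset Strict Implicit. Unset Printing Implicit Defensive.

Definition distn (a b : nat) : nat := (a - b) + (b - a).

Definition order_preserving n (f : {ffun 'I_n -> 'I_n}) : bool :=
  [forall x : 'I_n, forall y : 'I_n, (x <= y) ==> (f x <= f y)].

Definition contraction n (f : {ffun 'I_n -> 'I_n}) : bool :=
  [forall x : 'I_n, forall y : 'I_n, distn (f x) (f y) <= distn x y].

Definition OCT n : {set {ffun 'I_n -> 'I_n}} :=
  [set f | order_preserving f && contraction f].

Definition height n (f : {ffun 'I_n -> 'I_n}) : nat := #|[set f x | x in 'I_n]|.

(* Main.v *)
Require Import Defs.
From mathcomp Require Import all_boot zify.
Set Implicit Arguments. Unset Strict Implicit. Unset Printing Implicit Defensive.

Lemma vinordK n k : k <= n -> val (inord k : 'I_n.+1) = k.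
Proof. by move=> h; rewrite /= inordK. Qed.

Section S.
Variable m : nat.

Definition cnt (S : {set 'I_m}) (x : nat) : nat := #|[set i in S | i < x]|.

Lemma cnt0 S : cnt S 0 = 0.
Proof.
rewrite /cnt; apply/eqP; rewrite cards_eq0; apply/eqP/setP => i.
by rewrite !inE ltn0 andbF.
Qed.

Lemma cntS S x : cnt S x.+1 = cnt S x + [exists i in S, val i == x].
Proof.
rewrite /cnt; case: existsP => [[i /andP[iS /eqP ix]]|hn].
- have -> : [set j in S | j < x.+1] = i |: [set j in S | j < x].
    apply/setP => j; rewrite !inE ltnS leq_eqVlt -ix.
    case: (eqVneq j i) => [->|nji]; first by rewrite iS eqxx.
    by rewrite val_eqE (negbTE nji).
  by rewrite cardsU1 !inE ix ltnn andbF addnC.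
- rewrite addn0; apply: eq_card => j; rewrite !inE ltnS leq_eqVlt.
  case: (eqVneq (val j) x) => [hj|] //=.
  case jS: (j \in S) => //; exfalso; apply: hn; exists j; by rewrite jS hj eqxx.
Qed.

Lemma exS (S : {set 'I_m}) (i : 'I_m) : [exists j in S, val j == val i] = (i \in S).
Proof.
apply/existsP/idP => [[j /andP[jS /eqP ji]]|iS]; last by exists i; rewrite iS eqxx.
by rewrite -(val_inj ji).
Qed.

Lemma cnt_le (S : {set 'I_m}) x : cnt S x <= #|S|.
Proof.
apply: subset_leq_card; apply/subsetP => i; rewrite inE; by case/andP.
Qed.

Lemma cnt_m S : cnt S m = #|S|.
Proof. apply: eq_card => i; by rewrite inE ltn_ord andbT. Qed.

Lemma cnt_mono S x y : x <= y -> cnt S x <= cnt S y.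
Proof.
move=> hxy; apply: subset_leq_card; apply/subsetP => i; rewrite !inE.
case/andP => -> h /=; exact: leq_trans h hxy.
Qed.

Lemma cnt_step S x : cnt S x.+1 <= cnt S x + 1.
Proof. rewrite cntS leq_add2l; by case: existsP. Qed.

Lemma cnt_lip S x d : cnt S (x + d) <= cnt S x + d.
Proof.
elim: d => [|d IH]; first by rewrite !addn0.
rewrite addnS; have := cnt_step S (x + d); lia.
Qed.

Lemma cnt_ivt S k c : c <= cnt S k -> exists x, x <= k /\ cnt S x = c.
Proof.
elim: k c => [|k IH] c hc.
  by exists 0; move: hc; rewrite cnt0; lia.
case: (leqP c (cnt S k)) => h.
  by case: (IH c h) => x [hx e]; exists x; split => //; lia.
exists k.+1; split => //; have := cnt_step S k; lia.
Qed.

Definition Phi (a : nat) (S : {set 'I_m}) : {ffun 'I_m.+1 -> 'I_m.+1} :=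
  [ffun x : 'I_m.+1 => inord (a + cnt S x)].

Lemma PhiE a (S : {set 'I_m}) (x : 'I_m.+1) : a + #|S| <= m -> nat_of_ord (Phi a S x) = a + cnt S x.
Proof.
move=> h; rewrite /Phi ffunE /= inordK // ltnS; have := cnt_le S x; lia.
Qed.

Lemma Phi_OCT a (S : {set 'I_m}) : a + #|S| <= m -> Phi a S \in OCT m.+1.
Proof.
move=> h; rewrite inE; apply/andP; split; apply/forallP => x; apply/forallP => y.
- apply/implyP => hxy; rewrite !PhiE // leq_add2l; exact: cnt_mono.
- rewrite !PhiE // /distn.
  case: (leqP x y) => hxy.
    have := cnt_mono S hxy; have := cnt_lip S x (y - x); rewrite subnKC //; lia.
  have hyx := ltnW hxy.
  have := cnt_mono S hyx; have := cnt_lip S y (x - y); rewrite subnKC //; lia.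
Qed.

Lemma height_Phi a (S : {set 'I_m}) : a + #|S| <= m -> height (Phi a S) = #|S|.+1.
Proof.
move=> h; rewrite /height.
have -> : [set Phi a S x | x in 'I_m.+1] =
          [set (inord (a + nat_of_ord j) : 'I_m.+1) | j in 'I_(cnt S m).+1].
  apply/setP => y; apply/imsetP/imsetP => [[x _ ->]|[j _ ->]].
  - have hc : cnt S x < (cnt S m).+1 by rewrite ltnS cnt_mono // -ltnS.
    exists (Ordinal hc) => //; apply: ord_inj; rewrite PhiE //= inordK //.
    have := cnt_le S x; lia.
  - have hj : j <= cnt S m by rewrite -ltnS.
    case: (cnt_ivt hj) => x [hx e].
    exists (inord x) => //; apply: ord_inj; rewrite PhiE // inordK ?ltnS // -e.
    rewrite /= inordK //. all: try (have := cnt_le S x; lia).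
rewrite card_imset ?card_ord; first by rewrite cnt_m.
move=> i j /(congr1 (@nat_of_ord _)).
have := cnt_le S m; have := ltn_ord i; have := ltn_ord j => hj hi hc.
rewrite /= !inordK; first (move=> e; apply: ord_inj; lia); lia.
Qed.

Section Inv.
Variable f : {ffun 'I_m.+1 -> 'I_m.+1}.
Hypothesis hf : f \in OCT m.+1.

Definition Sf : {set 'I_m} := [set i : 'I_m | f (inord i.+1) != f (inord i)].

Lemma OCT_step x : x < m ->
  nat_of_ord (f (inord x.+1)) = nat_of_ord (f (inord x)) + (f (inord x.+1) != f (inord x)).
Proof.
move=> hx; move: hf; rewrite inE => /andP[/forallP op /forallP ct].
have k1 : nat_of_ord (inord x : 'I_m.+1) = x := vinordK (ltnW hx).
have k2 : nat_of_ord (inord x.+1 : 'I_m.+1) = x.+1 := vinordK hx.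
have h1 := implyP (forallP (op (inord x)) (inord x.+1)).
rewrite k1 k2 leqnSn in h1; have {}h1 := h1 isT.
have h2 := forallP (ct (inord x)) (inord x.+1).
rewrite /distn k1 k2 in h2.
case: (eqVneq (f (inord x.+1)) (f (inord x))) => [->|ne]; first by rewrite addn0.
have ne' : nat_of_ord (f (inord x.+1)) <> nat_of_ord (f (inord x)) by move=> e; move/eqP: ne; apply; apply: ord_inj.
rewrite addn1; lia.
Qed.

Lemma OCT_form x : x <= m -> nat_of_ord (f (inord x)) = nat_of_ord (f ord0) + cnt Sf x.
Proof.
elim: x => [|x IH] hx.
  by rewrite cnt0 addn0; congr (nat_of_ord (f _)); apply: ord_inj; rewrite inordK.
rewrite OCT_step // IH ?(ltnW hx) // cntS -addnA; congr (_ + (_ + _)).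
congr (nat_of_bool _). apply/idP/idP => [h|/existsP [i /andP[iS /eqP ix]]].
  by apply/existsP; exists (Ordinal hx); rewrite inE h eqxx.
by move: iS; rewrite inE -ix.
Qed.

Lemma OCT_bound : nat_of_ord (f ord0) + #|Sf| <= m.
Proof. rewrite -cnt_m -OCT_form //; by rewrite -ltnS. Qed.

Lemma OCT_eq : f = Phi (f ord0) Sf.
Proof.
apply/ffunP => x; apply: ord_inj; rewrite PhiE; last exact: OCT_bound.
by rewrite -OCT_form ?inord_val // -ltnS.
Qed.
End Inv.

End S.

Theorem corollary2p7 (n p : nat) (hn : 1 <= n) (hp1 : 1 <= p) (hpn : p <= n) :
  #|[set f in OCT n | height f == p]| = (n - p + 1) * 'C(n - 1, p - 1).
Proof.
case: n hn hpn => [//|m] _ hpn.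
set D := [set x : 'I_(m.+1 - p + 1) * {set 'I_m} | #|x.2| == p - 1].
have -> : [set f in OCT m.+1 | height f == p] = [set Phi (nat_of_ord x.1) x.2 | x : 'I_(m.+1 - p + 1) * {set 'I_m} in D].
  apply/setP => f; rewrite inE; apply/andP/imsetP.
  - move=> [hf /eqP hh].
    have B := OCT_bound hf; have E := OCT_eq hf.
    rewrite E height_Phi // in hh.
have t1 : f ord0 + #|Sf f| <= m := B. have t2 : #|Sf f|.+1 = p := hh. clear B hh.     have ha : nat_of_ord (f ord0) < m.+1 - p + 1 by lia.
    exists (Ordinal ha, Sf f) => //; rewrite inE /=; apply/eqP; rewrite -t2 subn1; reflexivity.
  - move=> [[x S] hD ->]; rewrite inE /= in hD; move/eqP: hD => hD.
    have {}hD : #|S| = p - 1 := hD.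
    have hb : x + #|S| <= m by have := ltn_ord x; lia.
    split; first exact: Phi_OCT.
    rewrite height_Phi //; apply/eqP; rewrite hD; lia.
rewrite card_in_imset.
  have -> : D = setX [set: 'I_(m.+1 - p + 1)] [set S : {set 'I_m} | #|S| == p - 1].
    by apply/setP => -[x S]; rewrite !inE.
  by rewrite cardsX cardsT card_ord card_draws card_ord subSS subn0.
move=> [a S] [b T]; rewrite !inE /= => /eqP hS /eqP hT E.
have {}hS : #|S| = p - 1 := hS. have {}hT : #|T| = p - 1 := hT.
have ha : a + #|S| <= m by have := ltn_ord a; lia.
have hb : b + #|T| <= m by have := ltn_ord b; lia.
have eab : a = b.
  apply: ord_inj; have := congr1 (fun f : {ffun 'I_m.+1 -> 'I_m.+1} => nat_of_ord (f ord0)) E.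
  by rewrite /= !PhiE //= !cnt0 !addn0.
subst b; congr (_, _); apply/setP => i.
have h0 := congr1 (fun f : {ffun 'I_m.+1 -> 'I_m.+1} => nat_of_ord (f (inord i))) E.
have h1 := congr1 (fun f : {ffun 'I_m.+1 -> 'I_m.+1} => nat_of_ord (f (inord i.+1))) E.
rewrite /= !PhiE // !inordK ?ltnS ?(ltnW (ltn_ord i)) ?ltn_ord // in h0 h1.
rewrite !cntS !exS in h1.
move: h0 h1; case: (i \in S); case: (i \in T) => //=; lia.
Qed.
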